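(* Let $\mathcal F=(f_1,\dots,f_m)\colon\mathbb R^n\to\mathbb R^m$ be continuously differentiable with each $f_i$ convex, let $Q\subset\mathbb R^m$ be nonempty, closed and convex, $Q^+:=Q-\mathbb R^m_+$, and let $x^k\in\mathbb R^n$. Set $p^k:=P_{Q^+}(\mathcal F(x^k))$, $\rho^k:=\mathcal F(x^k)-p^k$, $Q^+_k:=\{y\in\mathbb R^m:\langle\rho^k,y-p^k\rangle\le0\}$ and $\delta_k(x):=\tfrac12\mathrm{dist}^2(\mathcal F(x),Q^+_k)$ (so $\delta_k\equiv0$ if $\rho^k=0$, and $\delta_k(x)=[\langle\rho^k,\mathcal F(x)-p^k\rangle]_+^2/(2\|\rho^k\|^2)$ if $\rho^k\ne0$). Then $\delta_k$ is convex on $\mathbb R^n$.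
   Context: $Q-\mathbb R^m_+:=\{y-u:y\in Q,u\in\mathbb R^m_+\}$; $P_{Q^+}$ is the Euclidean metric projection onto $Q^+$; $[t]_+:=\max(t,0)$. *)

(* Defs.v *)
From HB Require Import structures.
From mathcomp Require Import all_boot all_order all_algebra.
From mathcomp Require Import all_classical all_reals all_analysis.
Set Implicit Arguments. Unset Strict Implicit. Unset Printing Implicit Defensive.
Import Order.TTheory GRing.Theory Num.Theory.
Import numFieldNormedType.Exports.
Local Open Scope classical_set_scope.
Local Open Scope ring_scope.

Section Defs.
Variable R : realType.

Definition dotp (m : nat) (u v : 'rV[R]_m) : R := \sum_(i < m) u 0 i * v 0 i.
Definition sqnorm (m : nat) (u : 'rV[R]_m) : R := dotp u u.

Definition convex_fun (n : nat) (g : 'rV[R]_n -> R) : Prop :=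
  forall (x y : 'rV[R]_n) (t : R), 0 <= t -> t <= 1 ->
    g (t *: x + (1 - t) *: y) <= t * g x + (1 - t) * g y.

Definition C1 (n : nat) (g : 'rV[R]_n -> R) : Prop :=
  (forall x, differentiable g x) /\
  (forall v : 'rV[R]_n, continuous (fun x => 'D_v g x)).

Definition Qplus (m : nat) (Q : set 'rV[R]_m) : set 'rV[R]_m :=
  [set y | exists q u : 'rV[R]_m, Q q /\ (forall i, 0 <= u 0 i) /\ y = q - u].

Definition is_proj (m : nat) (S : set 'rV[R]_m) (z p : 'rV[R]_m) : Prop :=
  S p /\ forall y, S y -> sqnorm (z - p) <= sqnorm (z - y).

Definition dist2 (m : nat) (z : 'rV[R]_m) (S : set 'rV[R]_m) : R :=
  inf [set sqnorm (z - y) | y in S].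

Definition halfspace (m : nat) (rho p : 'rV[R]_m) : set 'rV[R]_m :=
  [set y | dotp rho (y - p) <= 0].

End Defs.

(* Main.v *)
Require Import Defs.
From HB Require Import structures.
From mathcomp Require Import all_boot all_order all_algebra.
From mathcomp Require Import all_classical all_reals all_analysis.
From mathcomp Require Import ring lra.
Import Order.TTheory GRing.Theory Num.Theory.
Import numFieldNormedType.Exports.
Local Open Scope classical_set_scope.
Local Open Scope ring_scope.

Section Aux.
Variable R : realType.
Variable m : nat.
Implicit Types u v w : 'rV[R]_m.

Lemma dotpC u v : dotp u v = dotp v u.
Proof. by rewrite /dotp; apply eq_bigr => i _; rewrite mulrC. Qed.

Lemma dotpDr u v w : dotp u (v + w) = dotp u v + dotp u w.
Proof. by rewrite /dotp -big_split /=; apply eq_bigr => i _; rewrite !mxE; ring. Qed.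

Lemma dotpBr u v w : dotp u (v - w) = dotp u v - dotp u w.
Proof. by rewrite /dotp -sumrB /=; apply eq_bigr => i _; rewrite !mxE; ring. Qed.

Lemma dotpZr u v (c : R) : dotp u (c *: v) = c * dotp u v.
Proof. by rewrite /dotp mulr_sumr; apply eq_bigr => i _; rewrite !mxE; ring. Qed.

Lemma sqnorm_ge0 u : 0 <= sqnorm u.
Proof. by rewrite /sqnorm /dotp; apply: sumr_ge0 => i _; rewrite -expr2 sqr_ge0. Qed.

Lemma sqnormD u v : sqnorm (u + v) = sqnorm u + 2 * dotp u v + sqnorm v.
Proof.
rewrite /sqnorm /dotp mulr_sumr -!big_split /=; apply eq_bigr => i _; rewrite !mxE; ring.
Qed.

Lemma sqnormZ u (c : R) : sqnorm (c *: u) = c ^+ 2 * sqnorm u.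
Proof. by rewrite /sqnorm /dotp mulr_sumr; apply eq_bigr => i _; rewrite !mxE; ring. Qed.

Lemma sqnorm_eq0 u : sqnorm u = 0 -> forall v, dotp u v = 0.
Proof.
move=> h v; rewrite /dotp big1 // => i _.
have hi : u 0 i * u 0 i = 0.
  by apply: (@psumr_eq0P R _ xpredT (fun i => u 0 i * u 0 i)) => // j _; rewrite -expr2 sqr_ge0.
by move/eqP: hi; rewrite mulf_eq0 orbb => /eqP ->; rewrite mul0r.
Qed.

Lemma CS u w : dotp u w ^+ 2 <= sqnorm u * sqnorm w.
Proof.
set N := sqnorm u; set a := dotp u w.
have [N0|Npos] := eqVneq N 0.
  by rewrite /a sqnorm_eq0 // N0 mul0r expr0n.
have N0 : 0 < N by rewrite lt_def Npos sqnorm_ge0.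
have h := sqnorm_ge0 (N *: w - a *: u).
rewrite sqnormD -scaleN1r !sqnormZ !dotpZr dotpC dotpZr -/a -/N in h.
rewrite -(ler_pM2l N0); nra.
Qed.

Lemma inf_min (E : set R) x0 : E x0 -> lbound E x0 -> inf E = x0.
Proof.
move=> Ex lb; apply/eqP; rewrite eq_le; apply/andP; split.
  by apply: (ge_inf (ex_intro _ x0 lb)).
by apply: lb_le_inf => //; exists x0.
Qed.

Lemma dist2_half (rho p z : 'rV[R]_m) :
  dist2 z (halfspace rho p) =
  (Num.max (dotp rho (z - p)) 0) ^+ 2 / sqnorm rho.
Proof.
set a := dotp rho (z - p); set N := sqnorm rho.
have [N0|Npos] := eqVneq N 0.
  rewrite N0 invr0 mulr0; apply: inf_min.
    exists z; first by rewrite /halfspace /= sqnorm_eq0.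
    rewrite subrr /sqnorm /dotp big1 // => i _. by rewrite !mxE; exact: mul0r.
  by move=> _ [y _ <-]; apply: sqnorm_ge0.
have N0 : 0 < N by rewrite lt_def Npos sqnorm_ge0.
set M := Num.max a 0.
have M0 : 0 <= M by rewrite le_max lexx orbT.
apply: inf_min.
  exists (z - (M / N) *: rho).
    rewrite /halfspace /= (_ : z - _ - p = (z - p) - (M / N) *: rho); last first.
      by rewrite addrAC.
    rewrite dotpBr dotpZr -/a -/N mulfVK //; rewrite subr_le0 le_max lexx //.
  rewrite opprB addrC subrK sqnormZ -/N expr_div_n.
  by field.
move=> _ [y Hy <-].
rewrite /halfspace /= in Hy.
rewrite ler_pdivrMr //.
have [a0|a0] := leP a 0.
  by rewrite /M max_r // expr0n /= mulr_ge0 // sqnorm_ge0.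
rewrite /M max_l; last exact: ltW.
have e : dotp rho (z - y) = a - dotp rho (y - p).
  by rewrite /a -dotpBr; congr dotp; rewrite opprB addrA subrK.
have := CS rho (z - y); rewrite e -/N.
move=> h.
have h2 : a ^+ 2 <= (a - dotp rho (y - p)) ^+ 2.
  move: Hy a0; set d := dotp rho (y - p); clearbody d a; move=> Hy a0. rewrite ler_sqr ?nnegrE; lra.
rewrite mulrC; lra.
Qed.

End Aux.

Theorem lemma5 (R : realType) (n m : nat) (F : 'rV[R]_n -> 'rV[R]_m)
  (Q : set 'rV[R]_m) (xk : 'rV[R]_n) (pk : 'rV[R]_m) :
  (forall i : 'I_m, C1 (fun x => F x 0 i)) ->
  (forall i : 'I_m, convex_fun (fun x => F x 0 i)) ->
  Q !=set0 -> closed Q -> convex_set Q ->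
  is_proj (Qplus Q) (F xk) pk ->
  let rhok := F xk - pk in
  convex_fun (fun x => 2^-1 * dist2 (F x) (halfspace rhok pk)).
Proof.
move=> _ Fconv _ _ _ [Hp Hmin] rho.
have rho_ge0 : forall i, 0 <= rho 0 i.
  move=> i; rewrite leNgt; apply/negP => hneg.
  set t := - rho 0 i.
  have t0 : 0 < t by rewrite /t oppr_gt0.
  set e : 'rV[R]_m := delta_mx 0 i.
  have Qy : Qplus Q (pk - t *: e).
    case: Hp => q [u [Qq [u0 ->]]]; exists q, (u + t *: e); split => //; split.
      move=> j; rewrite !mxE; apply: addr_ge0 => //; apply: mulr_ge0; first exact: ltW.
      by case: (_ && _).
    by rewrite opprD addrA.
  have := Hmin _ Qy.
  rewrite (_ : F xk - (pk - t *: e) = rho + t *: e); last first.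
    by apply/rowP => j; rewrite !mxE; ring.
  rewrite (@sqnormD _ _ rho) sqnormZ dotpZr -/rho.
  have de : dotp rho e = rho 0 i.
    rewrite /dotp (bigD1 i) //= big1 => [|j /negbTE ji]; rewrite !mxE ?eqxx ?ji /=.
      by rewrite mulr1 addr0.
    by rewrite mulr0.
  have se : sqnorm e = 1.
    rewrite /sqnorm /dotp (bigD1 i) //= big1 => [|j /negbTE ji]; rewrite !mxE ?eqxx ?ji /=.
      by rewrite mulr1 addr0.
    by rewrite mulr0.
  rewrite de se /t; nra.
move=> x y t t0 t1 /=.
rewrite !dist2_half.
set N := sqnorm rho.
set A := dotp rho (F (t *: x + (1 - t) *: y) - pk).
set a1 := dotp rho (F x - pk).
set a2 := dotp rho (F y - pk).
have HA : A <= t * a1 + (1 - t) * a2.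
  rewrite /A /a1 /a2 /dotp !mulr_sumr -big_split /=; apply: ler_sum => i _; rewrite !mxE.
  have := Fconv i x y t t0 t1 => /= hc.
  have := rho_ge0 i; rewrite /rho !mxE => hr.
  have hd : 0 <= t * F x 0 i + (1 - t) * F y 0 i - F (t *: x + (1 - t) *: y) 0 i by rewrite subr_ge0.
  have := mulr_ge0 hr hd; nra.
have kk : 0 <= N^-1 by rewrite invr_ge0 sqnorm_ge0.
have M1a : a1 <= Num.max a1 0 by rewrite le_max lexx.
have M10 : 0 <= Num.max a1 0 by rewrite le_max lexx orbT.
have M2a : a2 <= Num.max a2 0 by rewrite le_max lexx.
have M20 : 0 <= Num.max a2 0 by rewrite le_max lexx orbT.
have MA0 : 0 <= Num.max A 0 by rewrite le_max lexx orbT.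
set M1 := Num.max a1 0 in M1a M10 *.
set M2 := Num.max a2 0 in M2a M20 *.
have MAle : Num.max A 0 <= t * M1 + (1 - t) * M2.
  rewrite ge_max; apply/andP; split; first by nra.
  by nra.
set MA := Num.max A 0 in MA0 MAle *.
have key : MA ^+ 2 <= t * M1 ^+ 2 + (1 - t) * M2 ^+ 2.
  have h1 : MA ^+ 2 <= (t * M1 + (1 - t) * M2) ^+ 2.
    by rewrite ler_sqr ?nnegrE //; nra.
  have h2 := mulr_ge0 (mulr_ge0 t0 (_ : 0 <= 1 - t)) (sqr_ge0 (M1 - M2)).
  have h3 : 0 <= 1 - t by lra.
  have := h2 h3; nra.
apply: (@le_trans _ _ (2^-1 * (N^-1 * (t * M1 ^+ 2 + (1 - t) * M2 ^+ 2)))).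
  rewrite ler_wpM2l // mulrC ler_wpM2l //.
by rewrite le_eqVlt; apply/orP; left; apply/eqP; ring.
Qed.
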